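(* Let $G$ be a finite group, $H$ a subgroup of $G$, $\phi: H \to \{\pm 1\}$ a homomorphism, and $c \in G$. Then the equality $\phi(c^{-1}hc) = \phi(h)$ holds for at least half of the elements $h \in H \cap cHc^{-1}$.
   Context: For $h \in H \cap cHc^{-1}$ one has $c^{-1}hc \in H$, so $\phi(c^{-1}hc)$ is defined. *)

(* Defs.v *)
From HB Require Import structures.
From mathcomp Require Import all_boot all_order all_algebra all_fingroup.
Set Implicit Arguments. Unset Strict Implicit. Unset Printing Implicit Defensive.
Import GRing.Theory Num.Theory.

(* A homomorphism phi : H -> {+1,-1}, where {+1,-1} is viewed as the
   multiplicative subgroup of the units of int.  phi is given as a function
   on the whole ambient group gT; only its values on H matter. *)
Definition sign_hom (gT : finGroupType) (H : {set gT}) (phi : gT -> int) : Prop :=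
  (forall h, h \in H -> (phi h = 1 \/ phi h = -1)%R) /\
  (forall x y, x \in H -> y \in H -> phi (x * y)%g = (phi x * phi y)%R).

(* Main.v *)
Require Import Defs.
From HB Require Import structures.
From mathcomp Require Import all_boot all_order all_algebra all_fingroup.
Import GRing.Theory.

Theorem lemma1 (gT : finGroupType) (H : {group gT}) (phi : gT -> int) (c : gT) :
  sign_hom H phi ->
  (#|(H :&: H :^ c^-1)%g| <= 2 * #|[set h in (H :&: H :^ c^-1)%g | phi (h ^ c)%g == phi h]|)%N.
Proof.
move=> [Hs Hm].
set K := (H :&: H :^ c^-1)%g.
set G := [set h in K | phi (h ^ c)%g == phi h].
set B := [set h in K | phi (h ^ c)%g != phi h].
have memK : forall h, h \in K -> h \in H /\ (h ^ c)%g \in H.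
  by move=> h; rewrite inE mem_conjgV => /andP[].
have negB : forall h, h \in K -> phi (h ^ c)%g != phi h -> phi (h ^ c)%g = (- phi h)%R.
  move=> h /memK [h1 h2] ne.
  by case: (Hs _ h1) ne => ->; case: (Hs _ h2) => ->.
have cardK : #|K| = (#|G| + #|B|)%N.
  rewrite -(cardsID [set h | phi (h ^ c)%g == phi h] K).
  by congr addn; apply: eq_card => x; rewrite !inE andbC.
have leBG : (#|B| <= #|G|)%N.
  case: (set_0Vmem B) => [-> | [k kB]]; first by rewrite cards0.
  move: kB; rewrite inE => /andP[kK kbad].
  rewrite -(card_imset B (mulgI k)).
  apply: subset_leq_card; apply/subsetP => y /imsetP [h hB ->].
  move: hB; rewrite inE => /andP[hK hbad].
  have kK' := kK; have hK' := hK.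
  move: kK' hK' => /memK [k1 k2] /memK [h1 h2].
  rewrite inE groupM //= conjMg (Hm (k ^ c)%g) // (Hm k h) //.
  rewrite (negB _ kK kbad) (negB _ hK hbad).
  by rewrite mulrNN eqxx.
by rewrite cardK mul2n -addnn leq_add2l.
Qed.
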